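(* Let $n\geqslant 1$, let $A=\{g,e_1,\ldots,e_n\}$ and let $R$ be the set of monoid relations on $A$: (R1) $g^n=1$; (R2) $e_i^2=e_i$ for $1\leqslant i\leqslant n$; (R3) $e_ie_j=e_je_i$ for $1\leqslant i<j\leqslant n$; (R4) $ge_1=e_ng$ and $ge_{i+1}=e_ig$ for $1\leqslant i\leqslant n-1$; (R5) $ge_1e_2\cdots e_n=e_1e_2\cdots e_n$. Then $\langle A\mid R\rangle$ is a monoid presentation of $\mathcal{CI}_n$ (with respect to the map sending the letter $g$ to the permutation $g$ and each letter $e_i$ to the partial identity $e_i$). It has $n+1$ generators and $\frac12(n^2+3n+4)$ relations.
   Context: Let $\Omega_n=\{1,\ldots,n\}$, $\mathcal{I}_n$ the symmetric inverse monoid on $\Omega_n$ (maps on the right, composed left to right). $g$ is the permutation $ig=i+1$ ($1\leqslant i\leqslant n-1$), $ng=1$; $\mathcal{C}_n=\{1,g,\ldots,g^{n-1}\}$; $\mathcal{CI}_n=\{\alpha\in\mathcal{I}_n\mid \alpha=\sigma|_{\mathrm{Dom}(\alpha)}\text{ for some }\sigma\in\mathcal{C}_n\}$; $e_i$ is the partial identity on $\Omega_n\setminus\{i\}$. A presentation $\langle A\mid R\rangle$ defines a monoid $M$ via a map $\phi:A\to M$ if $\phi$ is injective, $A\phi$ generates $M$, and the induced homomorphism $A^*\to M$ has kernel equal to the smallest congruence on the free monoid $A^*$ containing $R$. *)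

(* Defs.v *)
From mathcomp Require Import all_boot.
Set Implicit Arguments. Unset Strict Implicit. Unset Printing Implicit Defensive.

(* Omega_n = {1,...,n} is modelled by 'I_n = {0,...,n-1} (point i <-> ordinal i-1). *)

(* Partial maps on Omega_n; maps act on the right: x(ab) = (xa)b. *)
Definition pmap (n : nat) := {ffun 'I_n -> option 'I_n}.

Definition pcomp n (a b : pmap n) : pmap n := [ffun x => obind b (a x)].
Definition pid n : pmap n := [ffun x => Some x].

Definition is_pinj n (a : pmap n) : Prop :=
  forall x y : 'I_n, a x <> None -> a x = a y -> x = y.

Definition gfun n (x : 'I_n) : 'I_n := ordS x.
Definition gmap n : pmap n := [ffun x => Some (gfun x)].

(* C_n = {1, g, ..., g^(n-1)}; CI_n = restrictions of elements of C_n *)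
Definition in_CI n (a : pmap n) : Prop :=
  is_pinj a /\
  exists k, k < n /\ forall x : 'I_n, a x <> None -> a x = Some (iter k (@gfun n) x).

Definition emap n (i : 'I_n) : pmap n := [ffun x => if x == i then None else Some x].

(* Alphabet A = {g, e_1, ..., e_n}: None is the letter g, Some i is the letter e_(i+1). *)
Definition letter (n : nat) := option 'I_n.
Notation lg := (@None _).
Notation le i := (Some i).

Definition phi n (a : letter n) : pmap n :=
  match a with None => gmap n | Some i => emap i end.

Definition evalw n (w : seq (letter n)) : pmap n :=
  foldl (fun acc a => pcomp acc (phi a)) (pid n) w.

(* The relations R1 - R5 (R4 uniformly as g e_(i+1) = e_i g with indices mod n,
   i.e. g e_1 = e_n g and g e_(i+1) = e_i g for 1 <= i <= n-1). *)
Definition rels (n : nat) : seq (seq (letter n) * seq (letter n)) :=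
  [:: (nseq n lg, [::])]
  ++ [seq ([:: le i; le i], [:: le i]) | i <- enum 'I_n]
  ++ [seq ([:: le i; le j], [:: le j; le i])
       | i : 'I_n <- enum 'I_n, j : 'I_n <- filter (fun j : 'I_n => i < j) (enum 'I_n)]
  ++ [seq ([:: lg; le (ordS i)], [:: le i; lg]) | i <- enum 'I_n]
  ++ [:: (lg :: [seq le i | i <- enum 'I_n], [seq le i | i <- enum 'I_n])].

Definition is_congruence (T : Type) (rel : seq T -> seq T -> Prop) : Prop :=
  [/\ forall u, rel u u,
      forall u v, rel u v -> rel v u,
      forall u v w, rel u v -> rel v w -> rel u w
    & forall u v x y, rel u v -> rel (x ++ u ++ y) (x ++ v ++ y)].

Definition congr_gen (T : eqType) (R : seq (seq T * seq T)) (u v : seq T) : Prop :=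
  forall rel, is_congruence rel -> (forall l r, (l, r) \in R -> rel l r) -> rel u v.

Definition presents_CI n (R : seq (seq (letter n) * seq (letter n))) : Prop :=
  [/\ injective (@phi n),
      (forall w : seq (letter n), in_CI (evalw w)),
      (forall a : pmap n, in_CI a -> exists w : seq (letter n), evalw w = a)
    & forall u v, evalw u = evalw v <-> congr_gen R u v].

(* Main.v *)
Require Import Defs.
From mathcomp Require Import all_boot zify.
Import Defs.
Set Implicit Arguments. Unset Strict Implicit. Unset Printing Implicit Defensive.


Lemma cg_refl (T : eqType) (R : seq (seq T * seq T)) u : congr_gen R u u.
Proof. by move=> rel [h _ _ _] _. Qed.
Lemma cg_sym (T : eqType) (R : seq (seq T * seq T)) u v : congr_gen R u v -> congr_gen R v u.
Proof. move=> H rel Hc HR; case: (Hc) => _ h _ _; exact: h (H rel Hc HR). Qed.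
Lemma cg_trans (T : eqType) (R : seq (seq T * seq T)) u v w :
  congr_gen R u v -> congr_gen R v w -> congr_gen R u w.
Proof. move=> H1 H2 rel Hc HR; case: (Hc) => _ _ h _; exact: h _ _ _ (H1 rel Hc HR) (H2 rel Hc HR). Qed.
Lemma cg_ctx (T : eqType) (R : seq (seq T * seq T)) u v x y :
  congr_gen R u v -> congr_gen R (x ++ u ++ y) (x ++ v ++ y).
Proof. move=> H rel Hc HR; case: (Hc) => _ _ _ h; exact: h _ _ _ _ (H rel Hc HR). Qed.
Lemma cg_rel (T : eqType) (R : seq (seq T * seq T)) l r : (l, r) \in R -> congr_gen R l r.
Proof. by move=> H rel Hc HR; apply: HR. Qed.
Lemma cg_catl (T : eqType) (R : seq (seq T * seq T)) u v x :
  congr_gen R u v -> congr_gen R (x ++ u) (x ++ v).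
Proof. by move=> H; have := cg_ctx x [::] H; rewrite !cats0. Qed.
Lemma cg_catr (T : eqType) (R : seq (seq T * seq T)) u v y :
  congr_gen R u v -> congr_gen R (u ++ y) (v ++ y).
Proof. by move=> H; have := cg_ctx [::] y H. Qed.
Lemma cg_cat (T : eqType) (R : seq (seq T * seq T)) u u' v v' :
  congr_gen R u u' -> congr_gen R v v' -> congr_gen R (u ++ v) (u' ++ v').
Proof. move=> H1 H2; apply: cg_trans (cg_catr _ H1) (cg_catl _ H2). Qed.

Lemma pmapP n (f g : pmap n) : (forall x, f x = g x) -> f = g.
Proof. move=> H. by apply/ffunP. Qed.
Lemma pcompA n (a b c : pmap n) : pcomp (pcomp a b) c = pcomp a (pcomp b c).
Proof. by apply: pmapP => x; rewrite !ffunE; case: (a x) => //= y; rewrite ffunE. Qed.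
Lemma pcomp1p n (a : pmap n) : pcomp (pid n) a = a.
Proof. by apply: pmapP => x; rewrite !ffunE. Qed.
Lemma pcompp1 n (a : pmap n) : pcomp a (pid n) = a.
Proof. by apply: pmapP => x; rewrite !ffunE; case: (a x) => //= y; rewrite ffunE. Qed.

Lemma foldl_ev n (v : seq (letter n)) acc :
  foldl (fun acc a => pcomp acc (phi a)) acc v = pcomp acc (evalw v).
Proof.
elim: v acc => [|a v IH] acc /=; first by rewrite /evalw /= pcompp1.
by rewrite /evalw /= !IH pcomp1p pcompA.
Qed.
Lemma evalw_cat n (u v : seq (letter n)) : evalw (u ++ v) = pcomp (evalw u) (evalw v).
Proof. by rewrite /evalw foldl_cat foldl_ev. Qed.
Lemma evalw_cons n (a : letter n) v : evalw (a :: v) = pcomp (phi a) (evalw v).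
Proof. by rewrite -cat1s evalw_cat /evalw /= pcomp1p. Qed.

Lemma evalw_e n (l : seq 'I_n) :
  evalw (map (fun i => le i) l) = [ffun x => if x \in l then None else Some x].
Proof.
elim: l => [|i l IH]; first by apply: pmapP => x; rewrite !ffunE.
rewrite map_cons evalw_cons IH; apply: pmapP => x; rewrite !ffunE in_cons /=.
by case: (x == i) => //=; rewrite ffunE.
Qed.

Lemma evalw_g n k :
  evalw (nseq k (@None 'I_n)) = [ffun x => Some (iter k (@gfun n) x)].
Proof.
elim: k => [|k IH]; first by apply: pmapP => x; rewrite !ffunE.
rewrite [nseq _ _]/= evalw_cons IH; apply: pmapP => x; rewrite !ffunE /= ffunE.
by rewrite -iterSr.
Qed.

Lemma val_iterg n k (x : 'I_n) : val (iter k (@gfun n) x) = (x + k) %% n.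
Proof.
elim: k => [|k IH] /=; first by rewrite addn0 modn_small.
by rewrite IH -addn1 modnDml addn1 addnS.
Qed.

Lemma iterg_n n (x : 'I_n) : iter n (@gfun n) x = x.
Proof. by apply: val_inj; rewrite val_iterg modnDr modn_small. Qed.

Definition cg n := @congr_gen (letter n) (rels n).

Lemma R1in n : (nseq n (@None 'I_n), [::]) \in rels n.
Proof. by rewrite mem_cat mem_seq1 eqxx. Qed.
Lemma R2in n (i : 'I_n) : ([:: le i; le i], [:: le i]) \in rels n.
Proof. by rewrite mem_cat orbC mem_cat (map_f (fun i : 'I_n => ([:: le i; le i], [:: le i]))) ?mem_enum. Qed.
Lemma R3in n (i j : 'I_n) : i < j -> ([:: le i; le j], [:: le j; le i]) \in rels n.
Proof.
move=> ij; rewrite !mem_cat; apply/orP; right; apply/orP; right; apply/orP; left.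
apply/allpairsPdep; exists i, j; split => //; first by rewrite mem_enum.
by rewrite mem_filter ij mem_enum.
Qed.
Lemma R4in n (i : 'I_n) : ([:: lg; le (ordS i)], [:: le i; lg]) \in rels n.
Proof.
rewrite !mem_cat; apply/orP; right; apply/orP; right; apply/orP; right; apply/orP; left.
by rewrite (map_f (fun i : 'I_n => ([:: lg; le (ordS i)], [:: le i; lg]))) ?mem_enum.
Qed.
Lemma R5in n : (lg :: [seq le i | i <- enum 'I_n], [seq le i | i <- enum 'I_n]) \in rels n.
Proof.
rewrite !mem_cat; apply/orP; right; apply/orP; right; apply/orP; right; apply/orP; right.
by rewrite mem_seq1.
Qed.

Lemma e_idem n (i : 'I_n) : cg [:: le i; le i] [:: le i].
Proof. exact: cg_rel (R2in i). Qed.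
Lemma e_comm n (i j : 'I_n) : cg [:: le i; le j] [:: le j; le i].
Proof.
case: (ltngtP i j) => h.
- exact: cg_rel (R3in h).
- exact: cg_sym (cg_rel (R3in h)).
- by rewrite (val_inj h); exact: cg_refl.
Qed.

Definition lew n (l : seq 'I_n) : seq (letter n) := map (fun i => le i) l.

Lemma e_past n (l : seq 'I_n) i : cg (lew l ++ [:: le i]) (le i :: lew l).
Proof.
elim: l => [|x l IH] /=; first exact: cg_refl.
apply: cg_trans (cg_catl [:: le x] IH) _.
exact: (cg_catr (lew l) (e_comm x i)).
Qed.

Definition ew n (S : {set 'I_n}) := lew (filter (mem S) (enum 'I_n)).

Lemma ew_add_gen n (S : {set 'I_n}) (l : seq 'I_n) i : uniq l -> i \in l ->
  cg (lew (filter (mem S) l) ++ [:: le i]) (lew (filter (mem (i |: S)) l)).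
Proof.
elim: l => [|x l IH] //= /andP [xl ul]; rewrite in_cons.
case: (eqVneq i x) => [e _ | ix /= il].
  subst x.
  have -> : filter (mem (i |: S)) l = filter (mem S) l.
    apply: eq_in_filter => y yl; rewrite /= !inE.
    by case: (eqVneq y i) => // e; rewrite -e yl in xl.
  rewrite /= !inE eqxx /=; case: (i \in S) => /=.
  - apply: cg_trans (cg_catl [:: le i] (e_past _ i)) _.
    exact: (cg_catr _ (e_idem i)).
  - exact: e_past.
have xi : (x == i) = false by rewrite eq_sym (negbTE ix).
rewrite /= !inE xi /=.
case: (x \in S) => /=; last exact: IH.
exact: cg_catl [:: le x] (IH ul il).
Qed.

Lemma ew_add n (S : {set 'I_n}) i : cg (ew S ++ [:: le i]) (ew (i |: S)).
Proof. by apply: ew_add_gen; rewrite ?enum_uniq ?mem_enum. Qed.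

Lemma ew_lew n (S : {set 'I_n}) s : cg (ew S ++ lew s) (ew (S :|: [set x in s])).
Proof.
elim: s S => [|i s IH] S /=.
  rewrite cats0; have -> : S :|: [set x in [::]] = S by apply/setP=> y; rewrite !inE orbF.
  exact: cg_refl.
rewrite -cat1s catA; apply: cg_trans (cg_catr _ (ew_add S i)) _.
have -> : S :|: [set x in i :: s] = (i |: S) :|: [set x in s].
  by apply/setP=> y; rewrite !inE; case: (y \in S); case: (y == i).
exact: IH.
Qed.

Lemma ew0 n : ew (set0 : {set 'I_n}) = [::].
Proof. by rewrite /ew /lew; elim: (enum 'I_n) => //= x l; rewrite inE. Qed.
Lemma ewT n : ew [set: 'I_n] = [seq le i | i <- enum 'I_n].
Proof. by rewrite /ew /lew; congr map; elim: (enum 'I_n) => //= x l ->; rewrite inE. Qed.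

Lemma lew_ew n (s : seq 'I_n) : cg (lew s) (ew [set x in s]).
Proof.
have := ew_lew set0 s; rewrite ew0 /=.
by have -> : set0 :|: [set x in s] = [set x in s] by apply/setP=> y; rewrite !inE.
Qed.

Lemma g_past1 n (j : 'I_n) : cg [:: lg; le j] [:: le (ord_pred j); lg].
Proof. by have := cg_rel (R4in (ord_pred j)); rewrite ord_predK. Qed.

Lemma g_past n (s : seq 'I_n) : cg (lg :: lew s) (lew (map (@ord_pred n) s) ++ [:: lg]).
Proof.
elim: s => [|j s IH] /=; first exact: cg_refl.
apply: cg_trans (cg_catr (lew s) (g_past1 j)) _.
exact: cg_catl [:: le (ord_pred j)] IH.
Qed.

Lemma gk_past n k (i : 'I_n) :
  cg (nseq k lg ++ [:: le i]) (le (iter k (@ord_pred n) i) :: nseq k lg).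
Proof.
elim: k => [|k IH] /=; first exact: cg_refl.
apply: cg_trans (cg_catl [:: lg] IH) _.
exact: cg_catr (nseq k lg) (g_past1 _).
Qed.

Lemma gn n : cg (nseq n (@None 'I_n)) [::].
Proof. exact: cg_rel (R1in n). Qed.

Lemma zero_g n : cg (ew [set: 'I_n] ++ [:: lg]) (ew [set: 'I_n]).
Proof.
have e1 : [seq le i | i <- enum 'I_n] = lew (map (@ord_pred n) (map (@ordS n) (enum 'I_n))).
  by rewrite -map_comp /lew -map_comp; apply: eq_map => x /=; rewrite ordSK.
have e2 : [set x in map (@ordS n) (enum 'I_n)] = [set: 'I_n].
  apply/setP=> y; rewrite !inE; apply/mapP; exists (ord_pred y); rewrite ?mem_enum //.
  by rewrite ord_predK.
rewrite ewT e1; apply: cg_trans (cg_sym (g_past _)) _.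
apply: cg_trans (cg_catl [:: lg] (lew_ew _)) _.
rewrite e2 ewT -e1; exact: cg_rel (R5in n).
Qed.

Lemma sound n (u v : seq (letter n)) : cg u v -> evalw u = evalw v.
Proof.
move=> H; apply: (H (fun u v => evalw u = evalw v)).
  split => //; first by move=> ? ? ? -> ->.
  by move=> u' v' x y e; rewrite !evalw_cat e.
move=> l r; rewrite !mem_cat.
case/orP=> [|/orP [|/orP [|/orP []]]].
- rewrite mem_seq1 => /eqP [-> ->]; rewrite evalw_g; apply: pmapP => x.
  by rewrite !ffunE iterg_n.
- case/mapP => i _ [-> ->].
  rewrite !evalw_cons /evalw /= !pcompp1; apply: pmapP => x; rewrite !ffunE.
  by case: (eqVneq x i) => //= xi; rewrite ffunE (negbTE xi).
- case/allpairsPdep => i [j [_ _ [-> ->]]].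
  rewrite !evalw_cons /evalw /= !pcompp1; apply: pmapP => x; rewrite !ffunE.
  by case: (eqVneq x i) => xi; case: (eqVneq x j) => xj //=; rewrite !ffunE ?xi ?xj ?eqxx // ?(negbTE xi) ?(negbTE xj).
- case/mapP => i _ [-> ->].
  rewrite !evalw_cons /evalw /= !pcompp1; apply: pmapP => x; rewrite !ffunE /= !ffunE /=.
  rewrite /gfun (inj_eq (@ordS_inj n)).
  by case: (x == i) => //=; rewrite /gmap ffunE.
- rewrite inE => /eqP [-> ->]; rewrite evalw_cons.
  have := evalw_e (enum 'I_n); rewrite /lew => ->.
  by apply: pmapP => x; rewrite !ffunE /= ffunE !mem_enum.
Qed.

Definition nfw n (S : {set 'I_n}) k := ew S ++ nseq k lg.
Definition sem n (S : {set 'I_n}) k : pmap n :=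
  [ffun x => if x \in S then None else Some (iter k (@gfun n) x)].

Lemma evalw_nfw n (S : {set 'I_n}) k : evalw (nfw S k) = sem S k.
Proof.
rewrite /nfw evalw_cat /ew evalw_e evalw_g; apply: pmapP => x.
rewrite !ffunE mem_filter mem_enum andbT /=.
by case: (x \in S) => //=; rewrite ffunE.
Qed.

Lemma nseq_rcons (T : Type) k (x : T) : nseq k x ++ [:: x] = nseq k.+1 x.
Proof. by elim: k => //= k ->. Qed.

Lemma iter_canK (T : Type) (f g : T -> T) k : cancel f g -> cancel (iter k f) (iter k g).
Proof.
move=> fK; elim: k => // k IH x.
by rewrite iterSr iterS fK IH.
Qed.

Lemma exists_nf n (w : seq (letter n)) : 0 < n ->
  exists S k, k < n /\ cg w (nfw S k).
Proof.
move=> n0; elim/last_ind: w => [|w a [S [k [kn IH]]]].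
  by exists set0, 0; split => //; rewrite /nfw ew0; exact: cg_refl.
rewrite -cats1; have H1 := cg_catr [:: a] IH.
case: a H1 => [i|] H1.
- exists ((iter k (@ord_pred n) i) |: S), k; split => //.
  apply: cg_trans H1 _; rewrite /nfw -catA.
  apply: cg_trans (cg_catl _ (gk_past k i)) _.
  rewrite -cat1s catA; exact: cg_catr _ (ew_add _ _).
- rewrite /nfw -catA nseq_rcons in H1.
  case: (ltnP k.+1 n) => kn'.
  + by exists S, k.+1; split.
  + have e : k.+1 = n by apply/eqP; rewrite eqn_leq kn.
    exists S, 0; split => //; apply: cg_trans H1 _; rewrite e /= ?cats0.
    by have := cg_catl (ew S) (@gn n); rewrite /nfw /= cats0.
Qed.

Lemma ewT_g n k : cg (nfw [set: 'I_n] k) (ew [set: 'I_n]).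
Proof.
rewrite /nfw; elim: k => [|k IH] /=; first by rewrite cats0; exact: cg_refl.
rewrite -cat1s catA; apply: cg_trans (cg_catr _ (@zero_g n)) IH.
Qed.

Lemma nf_unique n (S1 S2 : {set 'I_n}) k1 k2 : k1 < n -> k2 < n ->
  sem S1 k1 = sem S2 k2 -> cg (nfw S1 k1) (nfw S2 k2).
Proof.
move=> k1n k2n e.
have eS : S1 = S2.
  apply/setP=> x; have := congr1 (fun f : pmap n => f x) e; rewrite !ffunE.
  by case: (x \in S1); case: (x \in S2).
subst S2.
case: (pickP (fun x => x \notin S1)) => [x xS|all]; last first.
  have -> : S1 = setT by apply/setP=> y; rewrite inE; apply/negbFE/all.
  exact: cg_trans (@ewT_g n k1) (cg_sym (@ewT_g n k2)).
have := congr1 (fun f : pmap n => f x) e; rewrite !ffunE (negbTE xS) => -[] /(congr1 val).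
rewrite !val_iterg => /eqP; rewrite eqn_modDl !modn_small // => /eqP ->.
exact: cg_refl.
Qed.

Lemma in_CI_sem n (S : {set 'I_n}) k : k < n -> in_CI (sem S k).
Proof.
move=> kn; split; last first.
  by exists k; split => // x; rewrite ffunE; case: (x \in S).
move=> x y; rewrite !ffunE; case: (x \in S) => //; case: (y \in S) => // _ [].
move=> e; exact: (can_inj (iter_canK k (@ordSK n))) e.
Qed.

Lemma count_gt m b : count (fun j => m < j) (iota 0 b) = b - m.+1.
Proof.
elim: b => [|b IH] //; rewrite -[b.+1]addn1 iotaD count_cat IH /= add0n addn0.
by case: (ltnP m b) => h; lia.
Qed.

Lemma size_rels n : 1 <= n -> size (rels n) = (n ^ 2 + 3 * n + 4) %/ 2.
Proof.
move=> n1.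
rewrite /rels !size_cat !size_map size_allpairs_dep -enumT size_enum_ord.
rewrite -?enumT.
have -> : sumn [seq size (filter (fun j : 'I_n => i < j) (enum 'I_n)) | i : 'I_n <- enum 'I_n] = \sum_(i < n) i.
  rewrite sumnE big_map big_enum /=.
  rewrite (reindex_inj rev_ord_inj) /=; apply: eq_bigr => i _.
  rewrite size_filter.
  rewrite -(count_map val (fun j => n - i.+1 < j)) val_enum_ord count_gt.
  have := ltn_ord i; lia.
rewrite -(big_mkord xpredT (fun i => i)) bin2_sum bin2 /=.
have e : n ^ 2 = n * n.-1 + n by case: n n1 => // n _; rewrite /=; lia.
rewrite -divn2 e; move: (n * n.-1) => m; lia.
Qed.

Lemma evalw_nf n (w : seq (letter n)) : 0 < n ->
  exists S k, [/\ k < n, cg w (nfw S k) & evalw w = sem S k].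
Proof.
move=> n0; have [S [k [kn H]]] := exists_nf w n0.
by exists S, k; split => //; rewrite (sound H) evalw_nfw.
Qed.

Theorem theorem2p6 (n : nat) : 1 <= n ->
  [/\ presents_CI (rels n),
      #|{: letter n}| = n.+1
    & size (rels n) = (n ^ 2 + 3 * n + 4) %/ 2].
Proof.
move=> n1; split; last exact: size_rels; last by rewrite card_option card_ord.
split.
- case=> [i|] [j|] //= e.
  + have := congr1 (fun f : pmap n => f i) e; rewrite !ffunE eqxx.
    by case: eqVneq => // ->.
  + by have := congr1 (fun f : pmap n => f i) e; rewrite !ffunE eqxx.
  + by have := congr1 (fun f : pmap n => f j) e; rewrite !ffunE eqxx.
- move=> w; have [S [k [kn _ ->]]] := evalw_nf w n1; exact: in_CI_sem.
- move=> a [_ [k [kn Ha]]].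
  exists (nfw [set x | a x == None] k); rewrite evalw_nfw; apply: pmapP => x.
  rewrite !ffunE inE; case: eqP => [-> //|h].
  by rewrite Ha.
- move=> u v; split; last exact: sound.
  have [S1 [k1 [k1n H1 e1]]] := evalw_nf u n1.
  have [S2 [k2 [k2n H2 e2]]] := evalw_nf v n1.
  rewrite e1 e2 => e.
  apply: cg_trans H1 (cg_trans (nf_unique k1n k2n e) (cg_sym H2)).
Qed.
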